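(* Let $G=(V_G,E_G)$ be an undirected graph whose vertex set is partitioned among machines $M_1,\dots,M_m$ (every vertex is owned by exactly one machine), and let $G_t$ denote the partition owned by $M_t$. Let $P=(V_P,E_P)$ be a connected undirected query graph. Let $v$ be a data vertex owned by $M_t$ and $u\in V_P$ a query vertex. If $\mathrm{Span}_P(u)\le \mathrm{BD}_{G_t}(v)$, then there is no embedding $f$ of $P$ in $G$ such that $f(u)=v$ and $f(u')$ is not owned by $M_t$ for some $u'\in V_P$ with $u'\neq u$.
   Context: An embedding of $P$ in $G$ is an injective map $f:V_P\to V_G$ such that $(f(u_1),f(u_2))\in E_G$ for every $(u_1,u_2)\in E_P$. A vertex $w$ owned by $M_t$ is a border vertex of $G_t$ if some neighbour of $w$ in $G$ is owned by a machine other than $M_t$; $V^b_{G_t}$ is the set of border vertices of $G_t$. The border distance of $v$ is $\mathrm{BD}_{G_t}(v)=\min_{v'\in V^b_{G_t}} \mathrm{dist}(v,v')$, where $\mathrm{dist}$ is the shortest-path distance in $G$. The span of $u$ is $\mathrm{Span}_P(u)=\max_{u'\in V_P}\mathrm{dist}_P(u,u')$, the maximum shortest-path distance in $P$ from $u$ to any vertex of $P$. *)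

(* Defs.v *)
From mathcomp Require Import all_boot.
Set Implicit Arguments. Unset Strict Implicit. Unset Printing Implicit Defensive.

(* Graphs: a finite vertex type T with an edge relation e : rel T.
   Undirectedness is imposed as the hypothesis [symmetric e]. *)

Definition walkb (T : finType) (e : rel T) (x y : T) (k : nat) : bool :=
  [exists p : k.-tuple T, path e x p && (last x p == y)].

(* Shortest-path distance, extended: [None] = +infinity (unreachable).
   A shortest walk is a simple path, so it has fewer than #|T| edges. *)
Definition dist (T : finType) (e : rel T) (x y : T) : option nat :=
  match [seq k <- iota 0 #|T| | walkb e x y k] with
  | k :: _ => Some k
  | [::] => None
  end.

Definition emin (a b : option nat) : option nat :=
  match a, b with
  | None, _ => b
  | _, None => a
  | Some x, Some y => Some (minn x y)
  end.

Definition ele (a b : option nat) : bool :=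
  match a, b with
  | _, None => true
  | None, Some _ => false
  | Some x, Some y => x <= y
  end.

Definition border (VG : finType) (eG : rel VG) (m : nat) (owner : VG -> 'I_m)
    (t : 'I_m) (w : VG) : bool :=
  (owner w == t) && [exists w', eG w w' && (owner w' != t)].

Definition BD (VG : finType) (eG : rel VG) (m : nat) (owner : VG -> 'I_m)
    (t : 'I_m) (v : VG) : option nat :=
  foldr emin None [seq dist eG v w | w <- enum VG & border eG owner t w].

Definition Span (VP : finType) (eP : rel VP) (u : VP) : option nat :=
  foldr (fun a b => match a, b with
                    | Some x, Some y => Some (maxn x y)
                    | _, _ => None end)
        (Some 0) [seq dist eP u u' | u' <- enum VP].

Definition embedding (VP VG : finType) (eP : rel VP) (eG : rel VG)
    (f : VP -> VG) : Prop :=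
  injective f /\ forall a b, eP a b -> eG (f a) (f b).

(* Main.v *)
Require Import Defs.
From mathcomp Require Import all_boot.
Set Implicit Arguments. Unset Strict Implicit. Unset Printing Implicit Defensive.

Section S.
Variables (T : finType) (e : rel T).

Lemma walkbP x y k :
  reflect (exists p : seq T, [/\ size p = k, path e x p & last x p = y]) (walkb e x y k).
Proof.
apply: (iffP existsP) => [[p /andP [Hp /eqP Hl]]|[p [Hs Hp Hl]]].
  by exists (val p); rewrite size_tuple.
have Hs' : size p == k by rewrite Hs.
by exists (Tuple Hs'); rewrite /= Hp Hl eqxx.
Qed.

Lemma shorten_ex x p : path e x p -> exists p',
  [/\ path e x p', last x p' = last x p, uniq (x :: p') & size p' <= size p].
Proof.
elim: p x => [|y q IH] x /=.
  by move=> _; exists [::].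
case/andP => exy /IH [p'' [Hp Hl Hu Hs]].
case: (boolP (x \in y :: p'')) => Hx.
  rewrite in_cons in Hx; case/orP: Hx => [/eqP Exy|Hx].
    subst y; exists p''; split => //; exact: leqW.
  move: Hp Hl Hu; case/splitPr: Hx Hs => a b Hs.
  rewrite cat_path last_cat /= => /andP [_ /andP [_ Hb]] Hl.
  case/andP => _; rewrite cat_uniq => /and3P [_ _ Hu].
  exists b; split => //.
  by apply: leqW; apply: leq_trans Hs; rewrite size_cat /= -addSnnS leq_addl.
exists (y :: p''); split => //; [by rewrite /= exy | by apply/andP].
Qed.

Lemma dist_le x y k : walkb e x y k -> exists j, dist e x y = Some j /\ j <= k.
Proof.
case/walkbP => p [Hs Hp Hl].
case: (shorten_ex Hp) => p' [Hp' Hl' Hu Hs'].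
have Hlt : size p' < #|T|.
  have := uniq_leq_size Hu (fun z _ => mem_enum T z).
  by rewrite /= -cardE.
have Hw : walkb e x y (size p') by apply/walkbP; exists p'; rewrite Hl' Hl.
have Hin : size p' \in [seq k <- iota 0 #|T| | walkb e x y k].
  by rewrite mem_filter Hw mem_iota.
rewrite /dist.
have Hso : sorted ltn [seq k <- iota 0 #|T| | walkb e x y k].
  exact/sorted_filter/iota_ltn_sorted/ltn_trans.
move: Hin Hso; case: [seq _ <- _ | _] => [//|h s].
rewrite in_cons => Hin /= Hpath; exists h; split => //.
case/orP: Hin => [/eqP <-|Hin]; first by rewrite -Hs.
have := order_path_min ltn_trans Hpath.
move/allP/(_ _ Hin) => Hh; rewrite -Hs; apply: leq_trans Hs'.
exact: ltnW.
Qed.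

Lemma dist_walk x y k : dist e x y = Some k -> walkb e x y k.
Proof.
rewrite /dist.
have : forall j, j \in [seq k <- iota 0 #|T| | walkb e x y k] -> walkb e x y j.
  by move=> j; rewrite mem_filter => /andP [].
case: [seq _ <- _ | _] => [//|h s] H [<-]; apply: H; exact: mem_head.
Qed.
End S.

Lemma span_le (s : seq (option nat)) S d :
  foldr (fun a b => match a, b with
                    | Some x, Some y => Some (maxn x y)
                    | _, _ => None end) (Some 0) s = Some S ->
  Some d \in s -> d <= S.
Proof.
elim: s S => [//|a s IH] S /=.
case: a => [x|//]; case E: (foldr _ _ s) => [y|//] [<-].
rewrite in_cons => /orP [/eqP [->]|H]; first exact: leq_maxl.
apply: leq_trans (IH _ E H) _; exact: leq_maxr.
Qed.

Lemma bd_le (s : seq (option nat)) j :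
  Some j \in s -> exists b, foldr emin None s = Some b /\ b <= j.
Proof.
elim: s => [//|a s IH] /=.
rewrite in_cons => /orP [/eqP <-|H].
  case: (foldr emin None s) => [y|]; last by exists j.
  by exists (minn j y); rewrite geq_minl.
case: (IH H) => b [-> Hb]; case: a => [x|]; last by exists b.
by exists (minn x b); split => //; apply: leq_trans Hb; rewrite geq_minr.
Qed.

Lemma exit_walk (VG : finType) (eG : rel VG) (m : nat) (owner : VG -> 'I_m)
    (t : 'I_m) (q : seq VG) : forall x, owner x = t -> path eG x q ->
  owner (last x q) != t -> exists w k, [/\ k < size q, walkb eG x w k & border eG owner t w].
Proof.
elim: q => [|y q IH] x Hx /=; first by rewrite Hx eqxx.
case/andP => Exy Hp Hl.
case: (boolP (owner y == t)) => Hy.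
  case: (IH y (eqP Hy) Hp Hl) => w [k [Hk Hw Hb]].
  exists w, k.+1; split => //.
  case/walkbP: Hw => r [Hs Hr Hlr]; apply/walkbP; exists (y :: r).
  by rewrite /= Hs Exy Hr Hlr.
exists x, 0; split => //; first by apply/walkbP; exists [::].
rewrite /border Hx eqxx /=; apply/existsP; exists y; by rewrite Exy Hy.
Qed.

Theorem proposition1 (VG : finType) (eG : rel VG) (m : nat)
    (owner : VG -> 'I_m) (VP : finType) (eP : rel VP) (t : 'I_m)
    (v : VG) (u : VP) :
  symmetric eG -> symmetric eP ->
  (forall a b : VP, connect eP a b) ->
  owner v = t ->
  ele (Span eP u) (BD eG owner t v) ->
  ~ (exists f : VP -> VG, embedding eP eG f /\ f u = v /\
       exists u' : VP, u' != u /\ owner (f u') != t).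
Proof.
move=> _ _ Hconn Hv Hele [f [[_ Hemb] [Hfu [u' [_ Hown]]]]].
case/connectP: (Hconn u u') => p Hp Hlp.
have Hw0 : walkb eP u u' (size p) by apply/walkbP; exists p.
case: (dist_le Hw0) => d [Hd _].
case/walkbP: (dist_walk Hd) => q [Hsq Hq Hlq].
have Hq' : path eG v (map f q).
  by rewrite -Hfu; apply: homo_path Hq => a b; apply: Hemb.
have Hl' : owner (last v (map f q)) != t by rewrite -Hfu last_map Hlq.
case: (exit_walk Hv Hq' Hl') => w [k [Hk Hwk Hb]].
case: (dist_le Hwk) => j [Hj Hjk].
have Hin : Some j \in [seq dist eG v w | w <- enum VG & border eG owner t w].
  rewrite -Hj; apply: map_f; by rewrite mem_filter Hb mem_enum.
case: (bd_le Hin) => b [Hbd Hbj].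
move: Hele; rewrite /BD Hbd.
case HS: (Span eP u) => [S|//] /= HSb.
have Hin2 : Some d \in [seq dist eP u x | x <- enum VP] by rewrite -Hd map_f // mem_enum.
have := span_le HS Hin2.
rewrite size_map Hsq in Hk.
move=> HdS.
have : d < d by apply: leq_ltn_trans Hk; apply: leq_trans HdS (leq_trans HSb (leq_trans Hbj Hjk)).
by rewrite ltnn.
Qed.
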